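(* Let $m,n\ge0$ be integers and $\lambda$ a bipartition. Then $\lambda$ is almost $(m|n)$-cross if and only if its weight diagram $x_\lambda(m-n)$ has the following form: - every vertex $j\le -m-1$ is labelled $\wedge$; - every vertex $j\ge n+2$ is labelled $\vee$; - the $m+n+2$ vertices $-m,-m+1,\dots,n+1$ carry exactly $m+1$ labels $\times$ and $n+1$ labels $\bigcirc$, in some order.
   Context: A partition is a weakly decreasing sequence $\alpha=(\alpha_1,\alpha_2,\dots)$ of nonnegative integers, almost all zero. A bipartition is a pair $\lambda=(\lambda^\bullet,\lambda^\circ)$ of partitions. Containment is componentwise. A bipartition $\lambda$ is $(m|n)$-cross if there exists $k$ with $0\le k\le m$ such that $\lambda^\bullet_{k+1}+\lambda^\circ_{m-k+1}\le n$. It is almost $(m|n)$-cross if it is not $(m|n)$-cross but every bipartition strictly contained in it is $(m|n)$-cross. Set $I_\wedge(\lambda)=\{\lambda^\bullet_i-(i-1):i\ge1\}$ and $I_\vee(\lambda,\delta)=\{i-\delta-\lambda^\circ_i:i\ge1\}$. The weight diagram $x_\lambda(\delta)$ labels each integer $j$ by: - $\bigcirc$ if $j$ is in neither set; - $\wedge$ if $j$ is only in $I_\wedge(\lambda)$; - $\vee$ if $j$ is only in $I_\vee(\lambda,\delta)$; - $\times$ if $j$ is in both. *)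

(* Defs.v *)
From Stdlib Require Import ClassicalDescription.
From mathcomp Require Import all_boot all_order all_algebra.
Set Implicit Arguments. Unset Strict Implicit. Unset Printing Implicit Defensive.
Import Order.TTheory GRing.Theory Num.Theory.

(* A partition alpha = (alpha_1, alpha_2, ...) is encoded 0-based:
   the function a : nat -> nat with  a i = alpha_(i+1). *)
Definition is_partition (a : nat -> nat) : Prop :=
  (forall i, a i.+1 <= a i) /\ (exists N, forall i, N <= i -> a i = 0).

(* A bipartition is a pair (lb, lc) = (lambda^bullet, lambda^circ) of partitions. *)
Definition is_bipartition (lb lc : nat -> nat) : Prop :=
  is_partition lb /\ is_partition lc.

Definition bip_contained (mb mc lb lc : nat -> nat) : Prop :=
  forall i, mb i <= lb i /\ mc i <= lc i.

Definition bip_strictly_contained (mb mc lb lc : nat -> nat) : Prop :=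
  bip_contained mb mc lb lc /\ (exists i, mb i <> lb i \/ mc i <> lc i).

(* (m|n)-cross: exists 0<=k<=m with lambda^bullet_(k+1) + lambda^circ_(m-k+1) <= n *)
Definition is_cross (m n : nat) (lb lc : nat -> nat) : Prop :=
  exists k, k <= m /\ lb k + lc (m - k) <= n.

Definition almost_cross (m n : nat) (lb lc : nat -> nat) : Prop :=
  ~ is_cross m n lb lc /\
  (forall mb mc, is_bipartition mb mc -> bip_strictly_contained mb mc lb lc ->
                 is_cross m n mb mc).

Local Open Scope ring_scope.

(* I_wedge(lambda) = { lambda^bullet_i - (i-1) : i >= 1 } *)
Definition in_Iwedge (lb : nat -> nat) (j : int) : Prop :=
  exists i : nat, j = (lb i)%:Z - i%:Z.

(* I_vee(lambda, delta) = { i - delta - lambda^circ_i : i >= 1 } *)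
Definition in_Ivee (lc : nat -> nat) (delta : int) (j : int) : Prop :=
  exists i : nat, j = (i.+1)%:Z - delta - (lc i)%:Z.

Definition decP (P : Prop) : bool :=
  if excluded_middle_informative P then true else false.

Inductive wlabel := LCirc | LUp | LDown | LCross.

Definition wlabel_eqb (a b : wlabel) : bool :=
  match a, b with
  | LCirc, LCirc | LUp, LUp | LDown, LDown | LCross, LCross => true
  | _, _ => false
  end.

(* The weight diagram x_lambda(delta): the label of vertex j.
   LUp = wedge, LDown = vee, LCross = times, LCirc = circle. *)
Definition weight_diagram (lb lc : nat -> nat) (delta : int) (j : int) : wlabel :=
  match decP (in_Iwedge lb j), decP (in_Ivee lc delta j) with
  | false, false => LCirc
  | true, false => LUp
  | false, true => LDown
  | true, true => LCross
  end.

(* Main.v *)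
Require Import Defs.
From Stdlib Require Import ClassicalDescription.
From mathcomp Require Import all_boot all_order all_algebra zify.
Import Order.TTheory GRing.Theory Num.Theory.
Set Implicit Arguments. Unset Strict Implicit. Unset Printing Implicit Defensive.

Lemma part_mono a : is_partition a -> forall i j, (i <= j)%N -> a j <= a i.
Proof.
move=> [h _] i j /subnK <-; elim: (j - i)%N => [|k IH] //=.
rewrite addSn; exact: leq_trans (h _) IH.
Qed.

Definition Ccond m n (lb lc : nat -> nat) :=
  lb m.+1 = 0 /\ lc m.+1 = 0 /\ forall k, k <= m -> lb k + lc (m - k) = n.+1.

Lemma cross_swap m n lb lc : is_cross m n lb lc -> is_cross m n lc lb.
Proof. move=> [k [hk h]]; exists (m-k); split; first lia. rewrite subKn //; lia. Qed.

Lemma almost_swap m n lb lc : almost_cross m n lb lc -> almost_cross m n lc lb.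
Proof.
move=> [nc h]; split; first by move/cross_swap.
move=> mb mc [p1 p2] [hc [i hi]]; apply: cross_swap; apply: h.
  by split.
split; first by move=> j; have [] := hc j.
by exists i; case: hi; [right|left].
Qed.

Lemma ac_tail m n lb lc : is_bipartition lb lc -> almost_cross m n lb lc -> lb m.+1 = 0.
Proof.
move=> [[pl [N hN]] pc] [nc h].
case E: (lb m.+1) => [//|e].
pose mb := fun i => if (i <= m)%N then lb i else 0.
have: is_cross m n mb lc.
  apply: h.
    split=> //; split.
      move=> i; rewrite /mb; have := pl i; case: ifP; case: ifP => *; lia.
    by exists m.+1 => i hi; rewrite /mb; case: ifP => //; lia.
  split.
    by move=> i; split => //; rewrite /mb; case: ifP.
  exists m.+1; left; rewrite /mb ifF ?ltnn //; lia.
move=> [k [hk]]; rewrite /mb hk => H; exfalso; apply: nc; by exists k.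
Qed.

Lemma ac_sum m n lb lc k : is_bipartition lb lc -> almost_cross m n lb lc ->
  k <= m -> n.+1 - lc (m - k) < lb k -> False.
Proof.
move=> [pl' pc] [nc h] hk hlt.
have [pl [N hN]] := pl'.
pose mb := fun i => if (k <= i)%N then minn (lb i) (n.+1 - lc (m - k)) else lb i.
have: is_cross m n mb lc.
  apply: h.
    split=> //; split.
      move=> i; rewrite /mb; have := pl i; case: ifP; case: ifP => *; lia.
    by exists N => i hi; rewrite /mb hN //; case: ifP => //; lia.
  split.
    by move=> i; split => //; rewrite /mb; case: ifP => _ //; lia.
  exists k; left; rewrite /mb leqnn; lia.
move=> [j [hj]]; rewrite /mb; case: ifP => hkj H.
  have := part_mono pc (_ : m - j <= m - k)%N; move=> /(_ ltac:(lia)) hm.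
  apply: nc; exists j; split => //; lia.
apply: nc; by exists j.
Qed.

Lemma ac_to_C m n lb lc : is_bipartition lb lc -> almost_cross m n lb lc -> Ccond m n lb lc.
Proof.
move=> hb ha; split; first exact: ac_tail hb ha.
have hb' : is_bipartition lc lb by case: hb.
have ha' := almost_swap ha.
split; first exact: ac_tail hb' ha'.
move=> k hk.
have nk : ~ (lb k + lc (m - k) <= n).
  by move=> H; case: ha => nc _; apply: nc; exists k.
case: (ltnP (n.+1 - lc (m - k)) (lb k)) => H.
  suff: lb k + lc (m - k) <= n.+1 by lia.
  case: (leqP (lb k + lc (m - k)) n.+1) => // H2.
  by case: (ac_sum hb ha hk H).
case: (leqP (lb k + lc (m - k)) n.+1) => H2; first lia.
exfalso; apply: (@ac_sum m n lc lb (m - k)) => //; first lia.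
rewrite subKn //; lia.
Qed.

Lemma C_to_ac m n lb lc : is_bipartition lb lc -> Ccond m n lb lc -> almost_cross m n lb lc.
Proof.
move=> [pl pc] [h1 [h2 hs]].
have zb : forall i, (m < i)%N -> lb i = 0.
  by move=> i hi; have := part_mono pl hi; rewrite h1; lia.
have zc : forall i, (m < i)%N -> lc i = 0.
  by move=> i hi; have := part_mono pc hi; rewrite h2; lia.
split.
  by move=> [k [hk h]]; have := hs k hk; lia.
move=> mb mc _ [hc [i hi]]; case: hi => hi.
  have [e1 e2] := hc i.
  have ilm : (i <= m)%N.
    case: (leqP i m) => // /zb H; rewrite H in hi e1; lia.
  exists i; split => //; have := hs i ilm; have [_ e3] := hc (m - i); lia.
have [e1 e2] := hc i.
have ilm : (i <= m)%N.
  case: (leqP i m) => // /zc H; rewrite H in hi e2; lia.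
exists (m - i); split; first lia.
have := hs (m - i) (leq_subr _ _); rewrite subKn //.
have [e3 _] := hc (m - i); lia.
Qed.

Lemma decPP (P : Prop) : reflect P (Defs.decP P).
Proof. rewrite /Defs.decP; case: excluded_middle_informative => h; [left|right] => //. Qed.

Section WD.
Variables (lb lc : nat -> nat) (d j : int).
Let A := in_Iwedge lb j.
Let B := in_Ivee lc d j.
Lemma wd_cross : weight_diagram lb lc d j = LCross <-> A /\ B.
Proof. rewrite /weight_diagram; case: decPP => a; case: decPP => b; intuition; discriminate. Qed.
Lemma wd_circ : weight_diagram lb lc d j = LCirc <-> ~ A /\ ~ B.
Proof. rewrite /weight_diagram; case: decPP => a; case: decPP => b; intuition; discriminate. Qed.
Lemma wd_up : weight_diagram lb lc d j = LUp <-> A /\ ~ B.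
Proof. rewrite /weight_diagram; case: decPP => a; case: decPP => b; intuition; discriminate. Qed.
Lemma wd_down : weight_diagram lb lc d j = LDown <-> ~ A /\ B.
Proof. rewrite /weight_diagram; case: decPP => a; case: decPP => b; intuition; discriminate. Qed.
End WD.

Lemma wlabel_eqbP a b : reflect (a = b) (wlabel_eqb a b).
Proof. by case: a; case: b; constructor. Qed.

Local Open Scope ring_scope.

Lemma smono_dec (f : nat -> int) : (forall k, f k.+1 < f k) ->
  forall i j, (i < j)%N -> f j < f i.
Proof.
move=> h i j /subnK <-; elim: (j - i.+1)%N => [|k IH]; first by rewrite add0n.
by rewrite addSn; have := h (k + i.+1)%N; lia.
Qed.

Lemma smono_inc (f : nat -> int) : (forall k, f k < f k.+1) ->
  forall i j, (i < j)%N -> f i < f j.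
Proof.
move=> h i j /subnK <-; elim: (j - i.+1)%N => [|k IH]; first by rewrite add0n.
by rewrite addSn; have := h (k + i.+1)%N; lia.
Qed.

Lemma pig_up (f g : nat -> int) m K : (forall k, f k.+1 < f k) ->
  (forall i, g i < g i.+1) ->
  (forall k, (k <= K)%N -> exists i, (i <= m)%N /\ f k = g i) ->
  forall k, (k <= K)%N -> forall i, f k = g i -> (i + k <= m)%N.
Proof.
move=> hf hg hex; elim=> [|k IH] hk i e.
  have [i0 [hi0 e0]] := hex 0%N hk.
  case: (ssrnat.ltngtP i i0) => [/(smono_inc hg)|/(smono_inc hg)|->]; lia.
have [i' [_ e']] := hex k (ltnW hk).
have := IH (ltnW hk) i' e'.
have := hf k; rewrite e e' => h.
case: (ssrnat.ltngtP i i') => [|/(smono_inc hg)|E]; [lia|lia|rewrite E in h; lia].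
Qed.

Lemma pig_down (f g : nat -> int) m : (forall k, f k.+1 < f k) ->
  (forall i, g i < g i.+1) ->
  (forall k, (k <= m)%N -> exists i, (i <= m)%N /\ f k = g i) ->
  forall k, (k <= m)%N -> forall i, f k = g i -> (m <= i + k)%N.
Proof.
move=> hf hg hex k hk.
suff H : forall d k, (k + d = m)%N -> forall i, f k = g i -> (m <= i + k)%N.
  by apply: (H (m - k)%N); lia.
clear k hk; elim=> [|d IH] k hd i e; first lia.
have [i' [_ e']] := hex k.+1 ltac:(lia).
have := IH k.+1 ltac:(lia) i' e'.
have := hf k; rewrite e e' => h.
case: (ssrnat.ltngtP i' i) => [Hlt|/(smono_inc hg)|Hi]; [lia|lia|].
rewrite Hi in h; lia.
Qed.

Lemma count_ge (P : pred nat) N (t : seq nat) : uniq t ->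
  (forall x, x \in t -> (x < N)%N /\ P x) -> (size t <= count P (iota 0 N))%N.
Proof.
move=> ut H; rewrite -size_filter; apply: uniq_leq_size => // x xt.
rewrite mem_filter mem_iota; have [h1 h2] := H x xt; by rewrite h2 h1.
Qed.

Lemma count_eq (P : pred nat) N (t : seq nat) : uniq t ->
  (forall x, (x < N)%N -> P x = (x \in t)) -> (forall x, x \in t -> (x < N)%N) ->
  count P (iota 0 N) = size t.
Proof.
move=> ut H1 H2; rewrite -size_filter; apply: perm_size; apply: uniq_perm.
- exact: filter_uniq _ (iota_uniq 0 N).
- done.
move=> x; rewrite mem_filter mem_iota add0n /=.
case: (ssrnat.ltnP x N) => hx; first by rewrite andbT (H1 x hx).
rewrite andbF; apply/esym/negbTE/negP => /H2; lia.
Qed.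
Local Open Scope ring_scope.

Definition uu (lb : nat -> nat) (k : nat) : int := (lb k)%:Z - k%:Z.
Definition vv (m n : nat) (lc : nat -> nat) (i : nat) : int :=
  (i.+1)%:Z - (m%:Z - n%:Z) - (lc i)%:Z.

Lemma uu_dec lb : is_partition lb -> forall k, uu lb k.+1 < uu lb k.
Proof. move=> [pl _] k; have := pl k; rewrite /uu; lia. Qed.

Lemma vv_inc m n lc : is_partition lc -> forall i, vv m n lc i < vv m n lc i.+1.
Proof. move=> [pl _] k; have := pl k; rewrite /vv; lia. Qed.

Lemma wmono_dec (f : nat -> int) : (forall k, f k.+1 < f k) ->
  forall i j, (i <= j)%N -> f j <= f i.
Proof.
move=> h i j; case: (ssrnat.ltngtP i j) => [/(smono_dec h)|//|->]; lia.
Qed.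

Lemma wmono_inc (f : nat -> int) : (forall k, f k < f k.+1) ->
  forall i j, (i <= j)%N -> f i <= f j.
Proof.
move=> h i j; case: (ssrnat.ltngtP i j) => [/(smono_inc h)|//|->]; lia.
Qed.

Lemma C_to_D m n lb lc : is_bipartition lb lc -> Ccond m n lb lc ->
  [/\ (forall j : int, j <= - (m.+1)%:Z ->
          weight_diagram lb lc (m%:Z - n%:Z) j = LUp),
       (forall j : int, (n.+2)%:Z <= j ->
          weight_diagram lb lc (m%:Z - n%:Z) j = LDown),
       count (fun k : nat => wlabel_eqb
                (weight_diagram lb lc (m%:Z - n%:Z) (k%:Z - m%:Z)) LCross)
             (iota 0 (m + n).+2) = m.+1 :> nat
     & count (fun k : nat => wlabel_eqb
                (weight_diagram lb lc (m%:Z - n%:Z) (k%:Z - m%:Z)) LCirc)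
             (iota 0 (m + n).+2) = n.+1 :> nat].
Proof.
move=> [pl pc] [h1 [h2 hs]].
have zb : forall i, (m < i)%N -> lb i = 0%N.
  by move=> i hi; have := part_mono pl hi; rewrite h1; lia.
have zc : forall i, (m < i)%N -> lc i = 0%N.
  by move=> i hi; have := part_mono pc hi; rewrite h2; lia.
have hW : forall j, in_Iwedge lb j <->
    j <= - (m.+1)%:Z \/ exists k, (k <= m)%N /\ j = uu lb k.
  move=> j; split.
    move=> [i ->]; case: (ssrnat.leqP i m) => hi.
      by right; exists i.
    by left; rewrite zb //; lia.
  case=> [hj | [k [hk ->]]]; last by exists k.
  by exists `|j|%N; rewrite zb; lia.
have hV : forall j, in_Ivee lc (m%:Z - n%:Z) j <->
    (n.+2)%:Z <= j \/ exists k, (k <= m)%N /\ j = uu lb k.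
  move=> j; split.
    move=> [i ->]; case: (ssrnat.leqP i m) => hi.
      right; exists (m - i)%N; split; first lia.
      have := hs (m - i)%N (leq_subr _ _); rewrite subKn //; rewrite /uu; lia.
    by left; rewrite zc //; lia.
  case=> [hj | [k [hk ->]]].
    by exists (absz (j - 1 - n%:Z + m%:Z)); rewrite zc; lia.
  exists (m - k)%N; have := hs k hk; rewrite /uu; lia.
have hR : forall k, (k <= m)%N -> - (m%:Z) <= uu lb k /\ uu lb k <= (n.+1)%:Z.
  by move=> k hk; have := hs k hk; rewrite /uu; lia.
set t := [seq (lb k + (m - k))%N | k <- iota 0 m.+1].
have ut : uniq t.
  rewrite map_inj_in_uniq ?iota_uniq // => k k'; rewrite !mem_iota => hk hk' e.
  case: (ssrnat.ltngtP k k') => [/(smono_dec (uu_dec pl))|/(smono_dec (uu_dec pl))|//];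
   rewrite /uu; lia.
have memt : forall x, (x \in t) <-> exists k, (k <= m)%N /\ x%:Z - m%:Z = uu lb k.
  move=> x; split.
    move/mapP => [k]; rewrite mem_iota => hk ->.
    exists k; split; first lia. rewrite /uu; lia.
  move=> [k [hk e]]; apply/mapP; exists k; first by rewrite mem_iota; lia.
  rewrite /uu in e; lia.
have tN : forall x, x \in t -> (x < (m+n).+2)%N.
  by move=> x /memt [k [hk e]]; have := hR k hk; lia.
have hx : forall x, (x < (m+n).+2)%N ->
  (weight_diagram lb lc (m%:Z - n%:Z) (x%:Z - m%:Z) = LCross <-> x \in t) /\
  (weight_diagram lb lc (m%:Z - n%:Z) (x%:Z - m%:Z) = LCirc <-> x \notin t).
  move=> x hxN; rewrite wd_cross wd_circ hW hV; split; split.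
  - by move=> [[h|H] _]; [lia| apply/memt].
  - by move/memt => H; split; right.
  - by move=> [na _]; apply/negP => /memt H; apply: na; right.
  - move/negP => nt; split; move=> [h|H]; try lia; apply: nt; by apply/memt.
have ct : count (mem t) (iota 0 (m + n).+2) = m.+1.
  by rewrite (count_eq ut (P := mem t)) ?size_map ?size_iota.
split.
- move=> j hj; apply/wd_up; split; first by apply/hW; left.
  by move/hV => [|[k [hk e]]]; [lia|]; have := hR k hk; lia.
- move=> j hj; apply/wd_down; split; last by apply/hV; left.
  by move/hW => [|[k [hk e]]]; [lia|]; have := hR k hk; lia.
- rewrite -ct; apply: eq_in_count => x; rewrite mem_iota add0n /= => hxN.
  have [[c1 c2] _] := hx x hxN.
  by apply/idP/idP => [/wlabel_eqbP/c1 //| /c2 ?]; apply/wlabel_eqbP.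
- have := count_predC (mem t) (iota 0 (m + n).+2); rewrite ct size_iota.
  rewrite (@eq_in_count _ _ (predC (mem t))); first lia.
  move=> x; rewrite mem_iota add0n /= => hxN.
  have [_ [c1 c2]] := hx x hxN.
  by apply/idP/idP => [/wlabel_eqbP/c1 //| /c2 ?]; apply/wlabel_eqbP.
Qed.
Local Open Scope ring_scope.

Lemma D_to_C m n lb lc : is_bipartition lb lc ->
  [/\ (forall j : int, j <= - (m.+1)%:Z ->
          weight_diagram lb lc (m%:Z - n%:Z) j = LUp),
       (forall j : int, (n.+2)%:Z <= j ->
          weight_diagram lb lc (m%:Z - n%:Z) j = LDown),
       count (fun k : nat => wlabel_eqb
                (weight_diagram lb lc (m%:Z - n%:Z) (k%:Z - m%:Z)) LCross)
             (iota 0 (m + n).+2) = m.+1 :> nat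
     & count (fun k : nat => wlabel_eqb
                (weight_diagram lb lc (m%:Z - n%:Z) (k%:Z - m%:Z)) LCirc)
             (iota 0 (m + n).+2) = n.+1 :> nat] -> Ccond m n lb lc.
Proof.
move=> [pl pc] [hup hdn hcx hci].
set N := (m + n).+2 in hcx hci.
set Pc := (fun k : nat => _ ) in hcx.
set Po := (fun k : nat => _ ) in hci.
have hall : forall x, (x < N)%N -> Pc x || Po x.
  have e := count_predUI Pc Po (iota 0 N).
  have e0 : count (predI Pc Po) (iota 0 N) = 0%N.
    rewrite (@eq_count _ _ pred0) ?count_pred0 // => x /=.
    by rewrite /Pc /Po; case: weight_diagram.
  have : all (predU Pc Po) (iota 0 N).
    rewrite all_count size_iota; apply/eqP; have hN : N = (m + n).+2 by []; lia.
  by move/allP => H x hx; apply: H; rewrite mem_iota; lia.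
have win : forall j : int, - m%:Z <= j -> j <= (n.+1)%:Z ->
    (in_Iwedge lb j <-> in_Ivee lc (m%:Z - n%:Z) j).
  move=> j hj1 hj2; have := hall (absz (j + m%:Z)) ltac:(rewrite /N; lia).
  rewrite /Pc /Po.
  have -> : (absz (j + m%:Z))%:Z - m%:Z = j by lia.
  case/orP => /wlabel_eqbP; [move/wd_cross | move/wd_circ]; tauto.
have Au : forall k, in_Iwedge lb (uu lb k) by move=> k; exists k.
have Bv : forall i, in_Ivee lc (m%:Z - n%:Z) (vv m n lc i) by move=> i; exists i.
have uub : forall k, uu lb k <= (n.+1)%:Z.
  move=> k; have [//|h] := lerP (uu lb k) (n.+1)%:Z.
  by have := hdn (uu lb k) ltac:(lia); move/wd_down => [H _].
have vvb : forall i, - m%:Z <= vv m n lc i.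
  move=> i; have [h|//] := ltrP (vv m n lc i) (- m%:Z).
  by have := hup (vv m n lc i) ltac:(lia); move/wd_up => [_ H].
have h1 : lb m.+1 = 0%N.
  case E: (lb m.+1) => [//|e]; exfalso.
  set t := [seq absz (uu lb k + m%:Z) | k <- iota 0 m.+2].
  have lo : forall k, (k <= m.+1)%N -> - m%:Z <= uu lb k.
    by move=> k hk; have := wmono_dec (uu_dec pl) hk; rewrite /uu E; lia.
  have H : (size t <= count Pc (iota 0 N))%N.
    apply: count_ge.
      rewrite map_inj_in_uniq ?iota_uniq // => k k'; rewrite !mem_iota => hk hk' e'.
      have l1 := lo k ltac:(lia); have l2 := lo k' ltac:(lia).
      have ee : uu lb k = uu lb k' by lia.
      case: (ssrnat.ltngtP k k') => [/(smono_dec (uu_dec pl))|/(smono_dec (uu_dec pl))|//];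
        lia.
    move=> x /mapP [k]; rewrite mem_iota => hk ->.
    have l := lo k ltac:(lia); have u := uub k.
    split; first by rewrite /N; lia.
    rewrite /Pc; have -> : (absz (uu lb k + m%:Z))%:Z - m%:Z = uu lb k by lia.
    by apply/wlabel_eqbP/wd_cross; split => //; apply/win.
  by move: H; rewrite size_map size_iota hcx; lia.
have h2 : lc m.+1 = 0%N.
  case E: (lc m.+1) => [//|e]; exfalso.
  set t := [seq absz (vv m n lc k + m%:Z) | k <- iota 0 m.+2].
  have hi : forall k, (k <= m.+1)%N -> vv m n lc k <= (n.+1)%:Z.
    by move=> k hk; have := wmono_inc (vv_inc m n pc) hk; rewrite /vv E; lia.
  have H : (size t <= count Pc (iota 0 N))%N.
    apply: count_ge.
      rewrite map_inj_in_uniq ?iota_uniq // => k k'; rewrite !mem_iota => hk hk' e'.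
      have l1 := vvb k; have l2 := vvb k'.
      have ee : vv m n lc k = vv m n lc k' by lia.
      case: (ssrnat.ltngtP k k') =>
        [/(smono_inc (vv_inc m n pc))|/(smono_inc (vv_inc m n pc))|//]; lia.
    move=> x /mapP [k]; rewrite mem_iota => hk ->.
    have l := vvb k; have u := hi k ltac:(lia).
    split; first by rewrite /N; lia.
    rewrite /Pc; have -> : (absz (vv m n lc k + m%:Z))%:Z - m%:Z = vv m n lc k by lia.
    by apply/wlabel_eqbP/wd_cross; split => //; apply/win.
  by move: H; rewrite size_map size_iota hcx; lia.
have hex : forall k, (k <= m)%N -> exists i, (i <= m)%N /\ uu lb k = vv m n lc i.
  move=> k hk.
  have l : - m%:Z <= uu lb k.
    by have := wmono_dec (uu_dec pl) hk; rewrite /uu; lia.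
  have := uub k; move=> u.
  have [i e] : in_Ivee lc (m%:Z - n%:Z) (uu lb k) by apply/win.
  exists i; split; last exact: e.
  case: (ssrnat.leqP i m) => // hi.
  have := wmono_inc (vv_inc m n pc) hi; rewrite /vv h2; lia.
split => //; split => // k hk.
have [i [hi e]] := hex k hk.
have a := pig_up (uu_dec pl) (vv_inc m n pc) hex hk e.
have b := pig_down (uu_dec pl) (vv_inc m n pc) hex hk e.
have ei : i = (m - k)%N by lia.
rewrite ei in e; move: e; rewrite /uu /vv; lia.
Qed.

Unset Implicit Arguments.
Theorem proposition2p7 (m n : nat) (lb lc : nat -> nat) :
  is_bipartition lb lc ->
  (almost_cross m n lb lc <->
   [/\ (forall j : int, j <= - (m.+1)%:Z ->
          weight_diagram lb lc (m%:Z - n%:Z) j = LUp),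
       (forall j : int, (n.+2)%:Z <= j ->
          weight_diagram lb lc (m%:Z - n%:Z) j = LDown),
       count (fun k : nat => wlabel_eqb
                (weight_diagram lb lc (m%:Z - n%:Z) (k%:Z - m%:Z)) LCross)
             (iota 0 (m + n).+2) = m.+1 :> nat
     & count (fun k : nat => wlabel_eqb
                (weight_diagram lb lc (m%:Z - n%:Z) (k%:Z - m%:Z)) LCirc)
             (iota 0 (m + n).+2) = n.+1 :> nat]).
Proof.
move=> hb; split.
  by move=> ha; apply: C_to_D hb (ac_to_C hb ha).
by move=> hd; apply: C_to_ac hb (D_to_C hb hd).
Qed.
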